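(* If $p_{i,n}\ge0$ for all $n\in\mathbb N$ and $i\in\{0,\dots,m_n\}$, then the unique bounded solution $F$ on $[0,1]$ of the system $$f\big(\hat\varphi^k(x)\big)=\tilde\beta_{i_{k+1}(x),k+1}+\tilde p_{i_{k+1}(x),k+1}\,f\big(\hat\varphi^{k+1}(x)\big),\quad x=\Delta^{-\tilde Q}_{i_1(x)i_2(x)\dots}\in[0,1],\ k=0,1,2,\dots,$$ namely $F(x)=\beta_{i_1(x),1}+\sum_{k\ge2}\tilde\beta_{i_k(x),k}\prod_{j=1}^{k-1}\tilde p_{i_j(x),j}$, is a continuous probability distribution function on $[0,1]$: $F(0)=0$, $F(1)=1$, $F$ is non-decreasing and continuous on $[0,1]$.
   Context: Let $(m_n)_{n\ge1}$ be finite nonnegative integers and $\tilde Q=\|q_{i,n}\|$ ($i\in\{0,\dots,m_n\}$) with $q_{i,n}>0$, $\sum_{i}q_{i,n}=1$ for all $n$, and $\prod_n q_{i_n,n}=0$ for every digit sequence $(i_n)$. Put $a_{0,n}=0$, $a_{i,n}=\sum_{l<i}q_{l,n}$; $\Delta^{\tilde Q}_{j_1j_2\dots}=a_{j_1,1}+\sum_{n\ge2}a_{j_n,n}\prod_{l<n}q_{j_l,l}$. The nega-$\tilde Q$-representation $x=\Delta^{-\tilde Q}_{i_1i_2\dots}$ means $x=\Delta^{\tilde Q}_{i_1[m_2-i_2]i_3[m_4-i_4]\dots}$; every $x\in[0,1]$ has one. Shift operator: if $y=\Delta^{\tilde Q}_{j_1j_2\dots}$ then $\hat\varphi^k(y)=a_{j_{k+1},k+1}+\sum_{n\ge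 k+2}a_{j_n,n}\prod_{l=k+1}^{n-1}q_{j_l,l}$ ($\hat\varphi^0=\mathrm{id}$). Let $P=\|p_{i,n}\|$ have the same shape with $p_{i,n}\in(-1,1)$, $\sum_ip_{i,n}=1$, $\prod_n|p_{i_n,n}|=0$ for every digit sequence, $0<\sum_{i<c}p_{i,n}<1$ for $c\in\{1,\dots,m_n\}$. Put $\beta_{0,n}=0$, $\beta_{c,n}=\sum_{i<c}p_{i,n}$; for odd $n$: $\tilde p_{i,n}=p_{i,n}$, $\tilde\beta_{i,n}=\beta_{i,n}$; for even $n$: $\tilde p_{i,n}=p_{m_n-i,n}$, $\tilde\beta_{i,n}=\beta_{m_n-i,n}$. *)

(* Defs.v *)
From Stdlib Require Import Reals.
From Coquelicot Require Import Coquelicot.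
Open Scope R_scope.

(* Conventions: matrices are indexed as  q n i  = q_{i,n}  (column n >= 1,
   digit i in {0..m n}).  Index n = 0 is unused/irrelevant. *)

Fixpoint psum (f : nat -> R) (c : nat) : R :=
  match c with
  | O => 0
  | S c' => psum f c' + f c'
  end.

Fixpoint prod1 (f : nat -> R) (N : nat) : R :=
  match N with
  | O => 1
  | S N' => prod1 f N' * f (S N')
  end.

Definition valid_digits (m : nat -> nat) (d : nat -> nat) : Prop :=
  forall n, (1 <= n)%nat -> (d n <= m n)%nat.

Definition acoef (q : nat -> nat -> R) (n i : nat) : R := psum (q n) i.

(* Q-digits of a nega-Q representation: j_n = i_n (n odd), m_n - i_n (n even) *)
Definition nega_digit (m : nat -> nat) (d : nat -> nat) (n : nat) : nat :=
  if Nat.odd n then d n else (m n - d n)%nat.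

(* k-th term (k >= 0, corresponding to position n = k+1) of the series
   Delta^{Q}_{j_1 j_2 ...} = a_{j_1,1} + sum_{n>=2} a_{j_n,n} prod_{l<n} q_{j_l,l} *)
Definition Qterm (q : nat -> nat -> R) (j : nat -> nat) (k : nat) : R :=
  acoef q (S k) (j (S k)) * prod1 (fun l => q l (j l)) k.

Definition nega_rep (m : nat -> nat) (q : nat -> nat -> R) (d : nat -> nat) (x : R)
  : Prop := is_series (Qterm q (nega_digit m d)) x.

Definition ptil (m : nat -> nat) (p : nat -> nat -> R) (n i : nat) : R :=
  if Nat.odd n then p n i else p n (m n - i)%nat.
Definition betatil (m : nat -> nat) (p : nat -> nat -> R) (n i : nat) : R :=
  if Nat.odd n then psum (p n) i else psum (p n) (m n - i)%nat.

(* k-th term (position n = k+1) of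
   F(x) = beta_{i_1,1} + sum_{n>=2} beta~_{i_n,n} prod_{j<n} p~_{i_j,j} *)
Definition Fterm (m : nat -> nat) (p : nat -> nat -> R) (d : nat -> nat) (k : nat) : R :=
  betatil m p (S k) (d (S k)) * prod1 (fun l => ptil m p l (d l)) k.

(* Main.v *)
Require Import Defs.
From Stdlib Require Import Reals Lra Lia Classical.
From Coquelicot Require Import Coquelicot.
Open Scope R_scope.

Lemma sum_n_psum (a : nat -> R) n : sum_n a n = psum a (S n).
Proof.
  induction n as [|n IH].
  - rewrite sum_O. simpl. ring.
  - rewrite sum_Sn, IH. simpl. unfold plus; simpl. ring.
Qed.

Lemma series_iff (a : nat -> R) (l : R) :
  is_series a l <-> is_lim_seq (fun N => psum a N) l.
Proof.
  rewrite is_lim_seq_incr_1.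
  split; intro H.
  - apply is_lim_seq_ext with (sum_n a). intro n; apply sum_n_psum. exact H.
  - assert (H' : is_lim_seq (sum_n a) l).
    { apply is_lim_seq_ext with (fun n => psum a (S n)). intro n; symmetry; apply sum_n_psum. exact H. }
    exact H'.
Qed.

Definition good (m : nat -> nat) (c : nat -> nat -> R) : Prop :=
  (forall n i, (1 <= n)%nat -> (i <= m n)%nat -> 0 <= c n i) /\
  (forall n, (1 <= n)%nat -> psum (c n) (S (m n)) = 1).

Definition Sp (c : nat -> nat -> R) j N := psum (Qterm c j) N.
Definition Pr (c : nat -> nat -> R) (j : nat -> nat) N := prod1 (fun l => c l (j l)) N.

Lemma Sp_S c j N : Sp c j (S N) = Sp c j N + psum (c (S N)) (j (S N)) * Pr c j N.
Proof. reflexivity. Qed.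
Lemma Pr_S c j N : Pr c j (S N) = Pr c j N * c (S N) (j (S N)).
Proof. reflexivity. Qed.

Lemma psum_mono (f : nat -> R) K a b :
  (forall i, (i < K)%nat -> 0 <= f i) -> (a <= b)%nat -> (b <= K)%nat -> psum f a <= psum f b.
Proof.
  intros Hf Hab HbK. induction b as [|b IH].
  - replace a with 0%nat by lia. lra.
  - destruct (Nat.eq_dec a (S b)) as [->|Hne]. lra.
    simpl. specialize (Hf b ltac:(lia)). specialize (IH ltac:(lia) ltac:(lia)). lra.
Qed.

Lemma psum_strict (f : nat -> R) K a b :
  (forall i, (i < K)%nat -> 0 < f i) -> (a < b)%nat -> (b <= K)%nat -> psum f a < psum f b.
Proof.
  intros Hf Hab HbK. induction b as [|b IH]. lia.
  simpl. pose proof (Hf b ltac:(lia)).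
  destruct (Nat.eq_dec a b) as [->|Hne]. lra.
  specialize (IH ltac:(lia) ltac:(lia)). lra.
Qed.

Lemma good_psum_bd m c n i : good m c -> (1 <= n)%nat -> (i <= S (m n))%nat ->
  0 <= psum (c n) i <= 1.
Proof.
  intros [Hc Hs] Hn Hi. split.
  - replace 0 with (psum (c n) 0) by reflexivity.
    apply psum_mono with (S (m n)); try lia. intros k Hk; apply Hc; lia.
  - rewrite <- (Hs n Hn). apply psum_mono with (S (m n)); try lia. intros k Hk; apply Hc; lia.
Qed.

Lemma Pr_nonneg m c j N : good m c -> valid_digits m j -> 0 <= Pr c j N.
Proof.
  intros G V. induction N as [|N IH]. unfold Pr; simpl; lra.
  rewrite Pr_S. apply Rmult_le_pos. exact IH. apply (proj1 G). lia. apply V; lia.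
Qed.

Lemma term_nonneg m c j N : good m c -> valid_digits m j -> 0 <= Qterm c j N.
Proof.
  intros G V. change (Qterm c j N) with (psum (c (S N)) (j (S N)) * Pr c j N).
  apply Rmult_le_pos. apply (good_psum_bd m); auto. lia. pose proof (V (S N)); lia.
  apply Pr_nonneg with m; auto.
Qed.

Lemma Sp_mono m c j N M : good m c -> valid_digits m j -> (N <= M)%nat -> Sp c j N <= Sp c j M.
Proof.
  intros G V H. induction M as [|M IH].
  - replace N with 0%nat by lia; lra.
  - destruct (Nat.eq_dec N (S M)) as [->|Hne]. lra.
    unfold Sp in *; simpl. pose proof (term_nonneg m c j M G V). specialize (IH ltac:(lia)). lra.
Qed.

Lemma U_step c j N : Sp c j (S N) + Pr c j (S N) =
   Sp c j N + psum (c (S N)) (S (j (S N))) * Pr c j N.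
Proof. rewrite Sp_S, Pr_S. simpl. ring. Qed.

Lemma U_mono1 m c j N : good m c -> valid_digits m j ->
  Sp c j (S N) + Pr c j (S N) <= Sp c j N + Pr c j N.
Proof.
  intros G V. rewrite U_step.
  pose proof (good_psum_bd m c (S N) (S (j (S N))) G ltac:(lia) ltac:(pose proof (V (S N)); lia)).
  pose proof (Pr_nonneg m c j N G V).
  assert (psum (c (S N)) (S (j (S N))) * Pr c j N <= 1 * Pr c j N) by (apply Rmult_le_compat_r; lra).
  lra.
Qed.

Lemma U_mono m c j N M : good m c -> valid_digits m j -> (N <= M)%nat ->
  Sp c j M + Pr c j M <= Sp c j N + Pr c j N.
Proof.
  intros G V H. induction M as [|M IH].
  - replace N with 0%nat by lia; lra.
  - destruct (Nat.eq_dec N (S M)) as [->|Hne]. lra.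
    pose proof (U_mono1 m c j M G V). specialize (IH ltac:(lia)). lra.
Qed.

Lemma U_le1 m c j N : good m c -> valid_digits m j -> Sp c j N + Pr c j N <= 1.
Proof.
  intros G V. pose proof (U_mono m c j 0 N G V ltac:(lia)). change (Sp c j 0 + Pr c j 0) with (0+1) in H. lra.
Qed.

Lemma lim_le_ev (u : nat -> R) (l b : R) N : is_lim_seq u l -> (forall n, (N <= n)%nat -> u n <= b) -> l <= b.
Proof.
  intros H Hb. apply (is_lim_seq_incr_n u N l) in H.
  assert (Rbar_le l b).
  { apply (is_lim_seq_le _ _ _ _ (fun n => Hb (n+N)%nat ltac:(lia)) H (is_lim_seq_const b)). }
  exact H0.
Qed.

Lemma lim_ge_ev (u : nat -> R) (l b : R) N : is_lim_seq u l -> (forall n, (N <= n)%nat -> b <= u n) -> b <= l.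
Proof.
  intros H Hb. apply (is_lim_seq_incr_n u N l) in H.
  assert (Rbar_le b l).
  { apply (is_lim_seq_le _ _ _ _ (fun n => Hb (n+N)%nat ltac:(lia)) (is_lim_seq_const b) H). }
  exact H0.
Qed.

Lemma series_bounds m c j L : good m c -> valid_digits m j -> is_series (Qterm c j) L ->
  forall N, Sp c j N <= L <= Sp c j N + Pr c j N.
Proof.
  intros G V H N. apply series_iff in H. split.
  - apply (lim_ge_ev (Sp c j) L _ N H). intros n Hn. apply Sp_mono with m; auto.
  - apply (lim_le_ev (Sp c j) L _ N H). intros n Hn.
    pose proof (U_mono m c j N n G V Hn). pose proof (Pr_nonneg m c j n G V). lra.
Qed.

Lemma series_exists m c j : good m c -> valid_digits m j -> exists L, is_series (Qterm c j) L.
Proof.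
  intros G V. destruct (ex_finite_lim_seq_incr (Sp c j) 1) as [l Hl].
  - intro n. apply Sp_mono with m; auto.
  - intro n. pose proof (U_le1 m c j n G V). pose proof (Pr_nonneg m c j n G V). lra.
  - exists l. apply series_iff. exact Hl.
Qed.

Lemma series_01 m c j L : good m c -> valid_digits m j -> is_series (Qterm c j) L -> 0 <= L <= 1.
Proof.
  intros G V H. pose proof (series_bounds m c j L G V H 0). unfold Sp, Pr in H0; simpl in H0. lra.
Qed.

Lemma series_uniq (a : nat -> R) l1 l2 : is_series a l1 -> is_series a l2 -> l1 = l2.
Proof.
  intros H1 H2. apply series_iff in H1. apply series_iff in H2.
  apply is_lim_seq_unique in H1. apply is_lim_seq_unique in H2. rewrite H1 in H2. injection H2; auto.
Qed.

Lemma Pr_pos m q j N : (forall n i, (1 <= n)%nat -> (i <= m n)%nat -> 0 < q n i) ->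
  valid_digits m j -> 0 < Pr q j N.
Proof.
  intros Hq V. induction N as [|N IH]. unfold Pr; simpl; lra.
  rewrite Pr_S. apply Rmult_lt_0_compat. exact IH. apply Hq. lia. apply V; lia.
Qed.

Lemma top_Q m q j X N : good m q -> (forall n i, (1 <= n)%nat -> (i <= m n)%nat -> 0 < q n i) ->
  valid_digits m j -> is_series (Qterm q j) X -> X = Sp q j N + Pr q j N ->
  forall M, (N <= M)%nat -> j (S M) = m (S M).
Proof.
  intros G Hq V HX HN.
  assert (HU : forall M, (N <= M)%nat -> Sp q j M + Pr q j M = X).
  { intros M HM. pose proof (U_mono m q j N M G V HM). pose proof (series_bounds m q j X G V HX M). lra. }
  intros M HM. pose proof (HU M HM) as H1. pose proof (HU (S M) ltac:(lia)) as H2.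
  rewrite U_step in H2. pose proof (Pr_pos m q j M Hq V) as Hp.
  assert (E : psum (q (S M)) (S (j (S M))) = 1).
  { assert ((psum (q (S M)) (S (j (S M))) - 1) * Pr q j M = 0) by lra.
    apply Rmult_integral in H. destruct H; lra. }
  pose proof (V (S M) ltac:(lia)) as Hj.
  destruct (Nat.eq_dec (j (S M)) (m (S M))) as [e|ne]; auto.
  exfalso. assert (psum (q (S M)) (S (j (S M))) < psum (q (S M)) (S (m (S M)))).
  { apply psum_strict with (S (m (S M))); try lia. intros i Hi. apply Hq; lia. }
  rewrite (proj2 G (S M) ltac:(lia)) in H. lra.
Qed.

Lemma top_P m p j Y N : good m p -> valid_digits m j -> is_lim_seq (Pr p j) 0 ->
  (forall M, (N <= M)%nat -> j (S M) = m (S M)) ->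
  is_series (Qterm p j) Y -> Y = Sp p j N + Pr p j N.
Proof.
  intros G V Hpr Hj HY.
  assert (HU : forall M, (N <= M)%nat -> Sp p j M + Pr p j M = Sp p j N + Pr p j N).
  { intros M HM. induction M as [|M IH].
    - replace N with 0%nat by lia. reflexivity.
    - destruct (Nat.eq_dec N (S M)) as [->|ne]. reflexivity.
      rewrite U_step, Hj by lia. rewrite (proj2 G (S M) ltac:(lia)). rewrite <- IH by lia. ring. }
  apply series_iff in HY.
  assert (H2 : is_lim_seq (fun M => (Sp p j N + Pr p j N) - Pr p j M) ((Sp p j N + Pr p j N) - 0)).
  { apply is_lim_seq_minus'. apply is_lim_seq_const. exact Hpr. }
  assert (H3 : is_lim_seq (fun M => psum (Qterm p j) M) ((Sp p j N + Pr p j N) - 0)).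
  { apply is_lim_seq_ext_loc with (fun M => (Sp p j N + Pr p j N) - Pr p j M); auto.
    exists N. intros M HM. rewrite <- (HU M HM). unfold Sp. ring. }
  apply is_lim_seq_unique in HY. apply is_lim_seq_unique in H3. rewrite HY in H3.
  injection H3. intros; lra.
Qed.

Lemma bot_Q m q j X N : good m q -> (forall n i, (1 <= n)%nat -> (i <= m n)%nat -> 0 < q n i) ->
  valid_digits m j -> is_series (Qterm q j) X -> X = Sp q j N ->
  forall M, (N <= M)%nat -> j (S M) = 0%nat.
Proof.
  intros G Hq V HX HN.
  assert (HU : forall M, (N <= M)%nat -> Sp q j M = X).
  { intros M HM. pose proof (Sp_mono m q j N M G V HM). pose proof (series_bounds m q j X G V HX M). lra. }
  intros M HM. pose proof (HU M HM) as H1. pose proof (HU (S M) ltac:(lia)) as H2.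
  rewrite Sp_S in H2. pose proof (Pr_pos m q j M Hq V) as Hp.
  assert (E : psum (q (S M)) (j (S M)) = 0).
  { assert (psum (q (S M)) (j (S M)) * Pr q j M = 0) by lra.
    apply Rmult_integral in H. destruct H; lra. }
  pose proof (V (S M) ltac:(lia)) as Hj.
  destruct (Nat.eq_dec (j (S M)) 0) as [e|ne]; auto.
  exfalso. assert (psum (q (S M)) 0 < psum (q (S M)) (j (S M))).
  { apply psum_strict with (S (m (S M))); try lia. intros i Hi. apply Hq; lia. }
  simpl in H. lra.
Qed.

Lemma bot_P p j Y N : 
  (forall M, (N <= M)%nat -> j (S M) = 0%nat) ->
  is_series (Qterm p j) Y -> Y = Sp p j N.
Proof.
  intros Hj HY.
  assert (HU : forall M, (N <= M)%nat -> Sp p j M = Sp p j N).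
  { intros M HM. induction M as [|M IH].
    - replace N with 0%nat by lia. reflexivity.
    - destruct (Nat.eq_dec N (S M)) as [->|ne]. reflexivity.
      rewrite Sp_S, Hj by lia. rewrite <- IH by lia. simpl. ring. }
  apply series_iff in HY.
  assert (H3 : is_lim_seq (fun M => psum (Qterm p j) M) (Sp p j N)).
  { apply is_lim_seq_ext_loc with (fun M => Sp p j N); [|apply is_lim_seq_const].
    exists N. intros M HM. rewrite <- (HU M HM). reflexivity. }
  apply is_lim_seq_unique in HY. apply is_lim_seq_unique in H3. rewrite HY in H3.
  injection H3. intros; lra.
Qed.

Lemma prod1_ext f g N : (forall l, (1 <= l <= N)%nat -> f l = g l) -> prod1 f N = prod1 g N.
Proof.
  induction N as [|N IH]; intros H. reflexivity.
  simpl. rewrite IH by (intros; apply H; lia). rewrite H by lia. reflexivity.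
Qed.

Lemma agree_prefix c j j' N : (forall l, (1 <= l <= N)%nat -> j l = j' l) ->
  Pr c j N = Pr c j' N /\ Sp c j N = Sp c j' N.
Proof.
  induction N as [|N IH]; intros H. split; reflexivity.
  destruct IH as [IH1 IH2]. intros; apply H; lia.
  rewrite !Pr_S, !Sp_S, IH1, IH2, H by lia. split; reflexivity.
Qed.

Lemma firstdiff (j j' : nat -> nat) N :
  (forall n, (1 <= n <= N)%nat -> j n = j' n) \/
  exists n, (1 <= n <= N)%nat /\ j n <> j' n /\ forall l, (1 <= l < n)%nat -> j l = j' l.
Proof.
  induction N as [|N IH].
  - left. intros; lia.
  - destruct IH as [H|[n [Hn [Hne Hl]]]].
    + destruct (Nat.eq_dec (j (S N)) (j' (S N))) as [e|ne].
      * left. intros n Hn. destruct (Nat.eq_dec n (S N)) as [->|]; auto. apply H; lia.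
      * right. exists (S N). split. lia. split. auto. intros; apply H; lia.
    + right. exists n. split. lia. auto.
Qed.

Lemma key m q p j j' X X' Y Y' : good m q ->
  (forall n i, (1 <= n)%nat -> (i <= m n)%nat -> 0 < q n i) -> good m p ->
  (forall d, valid_digits m d -> is_lim_seq (Pr p d) 0) ->
  valid_digits m j -> valid_digits m j' ->
  is_series (Qterm q j) X -> is_series (Qterm q j') X' ->
  is_series (Qterm p j) Y -> is_series (Qterm p j') Y' -> X' <= X -> Y' <= Y.
Proof.
  intros Gq Hq Gp Hpr V V' HX HX' HY HY' HXX.
  destruct (classic (exists n, (1 <= n)%nat /\ j n <> j' n)) as [[n0 [Hn0 Hne0]] | Hall].
  - destruct (firstdiff j j' n0) as [H|[n [Hn [Hne Hl]]]].
    { exfalso; apply Hne0, H; lia. }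
    destruct n as [|k]. lia.
    assert (Hag : forall l, (1 <= l <= k)%nat -> j l = j' l) by (intros; apply Hl; lia).
    destruct (agree_prefix q j j' k Hag) as [Eq1 Eq2].
    destruct (agree_prefix p j j' k Hag) as [Ep1 Ep2].
    pose proof (V (S k) ltac:(lia)) as Va. pose proof (V' (S k) ltac:(lia)) as Va'.
    pose proof (series_bounds m p j Y Gp V HY (S k)) as BY.
    pose proof (series_bounds m p j' Y' Gp V' HY' (S k)) as BY'.
    rewrite !Sp_S, !Pr_S in BY, BY'.
    pose proof (Pr_nonneg m p j k Gp V) as Pp.
    assert (Hpm : forall a b, (a <= b)%nat -> (b <= S (m (S k)))%nat ->
              psum (p (S k)) a <= psum (p (S k)) b).
    { intros a b Hab Hb. apply psum_mono with (S (m (S k))); auto.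
      intros i Hi; apply (proj1 Gp); lia. }
    destruct (Compare_dec.lt_dec (j' (S k)) (j (S k))) as [Hlt|Hge].
    +
      assert (psum (p (S k)) (S (j' (S k))) <= psum (p (S k)) (j (S k))) by (apply Hpm; lia).
      assert (psum (p (S k)) (S (j' (S k))) * Pr p j k <= psum (p (S k)) (j (S k)) * Pr p j k)
        by (apply Rmult_le_compat_r; auto).
      simpl in H0. rewrite <- Ep1, <- Ep2 in BY'. lra.
    + assert (Hgt : (j (S k) < j' (S k))%nat) by lia.
      pose proof (series_bounds m q j X Gq V HX (S k)) as BX.
      pose proof (series_bounds m q j' X' Gq V' HX' (S k)) as BX'.
      rewrite !Sp_S, !Pr_S in BX, BX'. rewrite <- Eq1, <- Eq2 in BX'.
      pose proof (Pr_pos m q j k Hq V) as Pq.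
      set (A := psum (q (S k)) (j (S k))) in *.
      set (A' := psum (q (S k)) (j' (S k))) in *.
      set (qa := q (S k) (j (S k))) in *.
      assert (HA1 : A + qa <= A').
      { change (A + qa) with (psum (q (S k)) (S (j (S k)))). unfold A'.
        apply psum_mono with (S (m (S k))); try lia. intros i Hi; apply (proj1 Gq); lia. }
      assert (HH : (A' - (A + qa)) * Pr q j k >= 0).
      { apply Rle_ge, Rmult_le_pos; lra. }
      assert (HE : (A' - (A + qa)) * Pr q j k = 0) by nra.
      apply Rmult_integral in HE. destruct HE as [HE|HE]; [|lra].
      assert (EX : X = Sp q j (S k) + Pr q j (S k)).
      { rewrite Sp_S, Pr_S. fold A qa. nra. }
      assert (EX' : X' = Sp q j' (S k)).
      { rewrite Sp_S, <- Eq1, <- Eq2. fold A'. nra. }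
      assert (Ha : j' (S k) = S (j (S k))).
      { destruct (Nat.eq_dec (j' (S k)) (S (j (S k)))) as [e|ne]; auto. exfalso.
        assert (psum (q (S k)) (S (j (S k))) < A').
        { apply psum_strict with (S (m (S k))); try lia. intros i Hi; apply Hq; lia. }
        simpl in H. fold A qa in H. lra. }
      pose proof (top_P m p j Y (S k) Gp V (Hpr j V) (top_Q m q j X (S k) Gq Hq V HX EX) HY) as TY.
      pose proof (bot_P p j' Y' (S k) (bot_Q m q j' X' (S k) Gq Hq V' HX' EX') HY') as TY'.
      rewrite TY, TY', !Sp_S, Pr_S, Ha, <- Ep1, <- Ep2. simpl. lra.
  - assert (Hag : forall N, Sp p j N = Sp p j' N).
    { intro N. refine (proj2 (agree_prefix p j j' N _)). intros l Hl. destruct (Nat.eq_dec (j l) (j' l)); auto.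
      exfalso. apply Hall. exists l. split; auto; lia. }
    apply series_iff in HY. apply series_iff in HY'.
    assert (HY2 : is_lim_seq (fun N => psum (Qterm p j') N) Y).
    { apply is_lim_seq_ext with (fun N => psum (Qterm p j) N); [apply Hag | exact HY]. }
    apply is_lim_seq_unique in HY'. apply is_lim_seq_unique in HY2. rewrite HY' in HY2.
    injection HY2; intros; lra.
Qed.

Fixpoint pick (b : nat -> R) (k : nat) (r : R) : nat :=
  match k with
  | O => O
  | S k' => if Rle_dec (b (S k')) r then S k' else pick b k' r
  end.

Lemma pick_le b k r : (pick b k r <= k)%nat.
Proof. induction k as [|k IH]; simpl. lia. destruct (Rle_dec (b (S k)) r); lia. Qed.

Lemma pick_lo b k r : b 0%nat <= r -> b (pick b k r) <= r.
Proof. intro H. induction k as [|k IH]; simpl. exact H. destruct (Rle_dec (b (S k)) r); auto. Qed.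

Lemma pick_hi b k r : (pick b k r < k)%nat -> r < b (S (pick b k r)).
Proof.
  induction k as [|k IH]; simpl; intro H. lia.
  destruct (Rle_dec (b (S k)) r) as [h|h]. lia.
  destruct (Nat.eq_dec (pick b k r) k) as [e|ne]. rewrite e. lra.
  apply IH. pose proof (pick_le b k r). lia.
Qed.

Fixpoint st (m : nat -> nat) (p : nat -> nat -> R) (y : R) (n : nat) : R :=
  match n with
  | O => y
  | S n' => let r := st m p y n' in
            let d := pick (psum (p (S n'))) (m (S n')) r in
            (r - psum (p (S n')) d) / p (S n') d
  end.

Definition jg (m : nat -> nat) (p : nat -> nat -> R) (y : R) (n : nat) : nat :=
  match n with
  | O => O
  | S n' => pick (psum (p n)) (m n) (st m p y n')
  end.

Lemma jg_valid m p y : valid_digits m (jg m p y).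
Proof. intros n Hn. destruct n as [|n]. lia. simpl. apply pick_le. Qed.

Lemma pick_good m p n r : good m p ->
  (forall c, (1 <= c)%nat -> (c <= m n)%nat -> 0 < psum (p n) c < 1) ->
  (1 <= n)%nat -> 0 <= r <= 1 ->
  let d := pick (psum (p n)) (m n) r in
  psum (p n) d <= r /\ r <= psum (p n) d + p n d /\ 0 < p n d.
Proof.
  intros G Hb Hn Hr d.
  assert (Hlo : psum (p n) d <= r) by (apply pick_lo; simpl; lra).
  pose proof (pick_le (psum (p n)) (m n) r) as Hle. fold d in Hle.
  destruct (Nat.eq_dec d (m n)) as [e|ne].
  - assert (Hs : psum (p n) d + p n d = 1).
    { rewrite e. change (psum (p n) (m n) + p n (m n)) with (psum (p n) (S (m n))).
      apply (proj2 G n Hn). }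
    split; auto. split. lra.
    destruct (Nat.eq_dec (m n) 0) as [z|nz].
    + rewrite e, z in Hs. rewrite e, z. simpl in Hs. lra.
    + pose proof (Hb (m n) ltac:(lia) ltac:(lia)). rewrite e in Hs. rewrite e. lra.
  - pose proof (pick_hi (psum (p n)) (m n) r ltac:(fold d; lia)) as Hhi. fold d in Hhi.
    simpl in Hhi. split; auto. split; lra.
Qed.

Lemma st_inv m p y : good m p ->
  (forall n c, (1 <= n)%nat -> (1 <= c)%nat -> (c <= m n)%nat -> 0 < psum (p n) c < 1) ->
  0 <= y <= 1 ->
  forall N, 0 <= st m p y N <= 1 /\
    y = Sp p (jg m p y) N + Pr p (jg m p y) N * st m p y N.
Proof.
  intros G Hb Hy N. induction N as [|N [IH1 IH2]].
  - simpl. unfold Sp, Pr; simpl. split; [lra | ring].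
  - destruct (pick_good m p (S N) (st m p y N) G (fun c => Hb (S N) c ltac:(lia)) ltac:(lia) IH1) as [h1 [h2 h3]].
    set (d := pick (psum (p (S N))) (m (S N)) (st m p y N)) in *.
    assert (Hst : st m p y (S N) = (st m p y N - psum (p (S N)) d) / p (S N) d) by reflexivity.
    assert (Hj : jg m p y (S N) = d) by reflexivity.
    rewrite Hst, Sp_S, Pr_S, Hj. split.
    + split. apply Rmult_le_pos. lra. left; apply Rinv_0_lt_compat; lra.
      apply Rmult_le_reg_r with (p (S N) d); auto. unfold Rdiv. rewrite Rmult_assoc, Rinv_l by lra. lra.
    + rewrite IH2 at 1. field. lra.
Qed.

Lemma prep_exists m p y : good m p ->
  (forall n c, (1 <= n)%nat -> (1 <= c)%nat -> (c <= m n)%nat -> 0 < psum (p n) c < 1) ->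
  (forall d, valid_digits m d -> is_lim_seq (Pr p d) 0) ->
  0 <= y <= 1 -> is_series (Qterm p (jg m p y)) y.
Proof.
  intros G Hb Hpr Hy. apply series_iff.
  set (j := jg m p y).
  apply is_lim_seq_le_le with (u := fun N => y - Pr p j N) (w := fun N => y).
  - intro N. destruct (st_inv m p y G Hb Hy N) as [h1 h2]. fold j in h2.
    pose proof (Pr_nonneg m p j N G (jg_valid m p y)).
    assert (Pr p j N * st m p y N <= Pr p j N * 1) by (apply Rmult_le_compat_l; lra).
    assert (0 <= Pr p j N * st m p y N) by (apply Rmult_le_pos; lra).
    change (psum (Qterm p j) N) with (Sp p j N). lra.
  - replace (Finite y) with (Finite (y - 0)) by (f_equal; ring).
    apply is_lim_seq_minus'. apply is_lim_seq_const. apply Hpr, jg_valid.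
  - apply is_lim_seq_const.
Qed.

Lemma j0_series c : is_series (Qterm c (fun _ => 0%nat)) 0.
Proof.
  apply series_iff. apply is_lim_seq_ext with (fun _ => 0); [|apply is_lim_seq_const].
  intro N. induction N as [|N IH]. reflexivity.
  simpl. rewrite <- IH. unfold Qterm, acoef. simpl. ring.
Qed.

Lemma jmax_series m c : good m c -> is_lim_seq (Pr c (fun n => m n)) 0 ->
  is_series (Qterm c (fun n => m n)) 1.
Proof.
  intros G H. assert (V : valid_digits m (fun n => m n)) by (intros n _; lia).
  destruct (series_exists m c _ G V) as [L HL].
  pose proof (top_P m c _ L 0 G V H ltac:(intros; reflexivity) HL) as E.
  unfold Sp, Pr in E; simpl in E. replace 1 with L by lra. exact HL.
Qed.

Lemma Fterm_eq m p d k : Fterm m p d k = Qterm p (nega_digit m d) k.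
Proof.
  unfold Fterm, Qterm, acoef, betatil, nega_digit.
  f_equal.
  - destruct (Nat.odd (S k)); reflexivity.
  - apply prod1_ext. intros l _. unfold ptil. destruct (Nat.odd l); reflexivity.
Qed.

Definition Fset m (q p : nat -> nat -> R) (x : R) : R -> Prop :=
  fun y => exists j X, valid_digits m j /\ is_series (Qterm q j) X /\ X <= x /\
                       is_series (Qterm p j) y.
Definition Fdef m q p x := real (Lub_Rbar (Fset m q p x)).

Theorem mainTheorem9
  (m : nat -> nat) (q p : nat -> nat -> R)
  (* conditions on Q~ *)
  (hq_pos : forall n i, (1 <= n)%nat -> (i <= m n)%nat -> 0 < q n i)
  (hq_sum : forall n, (1 <= n)%nat -> psum (q n) (S (m n)) = 1)
  (hq_prod : forall d, valid_digits m d ->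
      is_lim_seq (fun N => prod1 (fun l => q l (d l)) N) 0)
  (* conditions on P *)
  (hp_bd : forall n i, (1 <= n)%nat -> (i <= m n)%nat -> -1 < p n i < 1)
  (hp_sum : forall n, (1 <= n)%nat -> psum (p n) (S (m n)) = 1)
  (hp_prod : forall d, valid_digits m d ->
      is_lim_seq (fun N => prod1 (fun l => Rabs (p l (d l))) N) 0)
  (hp_beta : forall n c, (1 <= n)%nat -> (1 <= c)%nat -> (c <= m n)%nat ->
      0 < psum (p n) c < 1)
  (* hypothesis of the theorem *)
  (hp_nonneg : forall n i, (1 <= n)%nat -> (i <= m n)%nat -> 0 <= p n i) :
  exists F : R -> R,
    (forall x d, 0 <= x <= 1 -> valid_digits m d -> nega_rep m q d x ->
       is_series (Fterm m p d) (F x)) /\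
    F 0 = 0 /\ F 1 = 1 /\
    (forall x y, 0 <= x -> x <= y -> y <= 1 -> F x <= F y) /\
    (forall x, 0 <= x <= 1 -> forall eps, 0 < eps -> exists delta, 0 < delta /\
       forall y, 0 <= y <= 1 -> Rabs (y - x) < delta -> Rabs (F y - F x) < eps).
Proof.
  assert (Gq : good m q) by (split; auto; intros; left; apply hq_pos; auto).
  assert (Gp : good m p) by (split; auto).
  assert (Hpr : forall d, valid_digits m d -> is_lim_seq (Pr p d) 0).
  { intros d V. apply is_lim_seq_ext with (fun N => prod1 (fun l => Rabs (p l (d l))) N); auto.
    intro N. apply prod1_ext. intros l Hl. apply Rabs_pos_eq, hp_nonneg. lia. apply V; lia. }
  set (F := Fdef m q p).
  assert (Fat : forall j X Y, valid_digits m j -> is_series (Qterm q j) X ->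
            is_series (Qterm p j) Y -> F X = Y).
  { intros j X Y V HX HY.
    assert (L : is_lub_Rbar (Fset m q p X) (Finite Y)).
    { split.
      - intros y [j' [X' [V' [HX' [Hle HY']]]]]. simpl.
        exact (key m q p j j' X X' Y y Gq hq_pos Gp Hpr V V' HX HX' HY HY' Hle).
      - intros b Hb. apply Hb. exists j, X. repeat split; auto. lra. }
    unfold F, Fdef. rewrite (is_lub_Rbar_unique _ _ L). reflexivity. }
  assert (V0 : valid_digits m (fun _ => 0%nat)) by (intros n _; lia).
  assert (Vm : valid_digits m (fun n => m n)) by (intros n _; lia).
  assert (F0 : F 0 = 0) by (apply (Fat _ 0 0 V0); apply j0_series).
  assert (F1 : F 1 = 1).
  { apply (Fat _ 1 1 Vm); apply jmax_series; auto. apply hq_prod; auto. }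
  assert (Fspec : forall x, 0 <= x -> is_lub_Rbar (Fset m q p x) (Finite (F x)) /\ 0 <= F x <= 1).
  { intros x Hx. pose proof (Lub_Rbar_correct (Fset m q p x)) as Hl.
    assert (H0 : Rbar_le 0 (Lub_Rbar (Fset m q p x))).
    { apply (proj1 Hl). exists (fun _ => 0%nat), 0. repeat split; auto; apply j0_series. }
    assert (H1 : Rbar_le (Lub_Rbar (Fset m q p x)) 1).
    { apply (proj2 Hl). intros y [j' [X' [V' [HX' [Hle HY']]]]]. simpl.
      exact (proj2 (series_01 m p j' y Gp V' HY')). }
    unfold F, Fdef. destruct (Lub_Rbar (Fset m q p x)) as [r| |]; simpl in *; try tauto. }
  assert (Fmono : forall x y, 0 <= x -> x <= y -> F x <= F y).
  { intros x y Hx Hxy. destruct (Fspec x Hx) as [[_ Lx] _].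
    destruct (Fspec y ltac:(lra)) as [[Uy _] _].
    apply (Lx (Finite (F y))). intros z [j' [X' [V' [HX' [Hle HY']]]]].
    apply Uy. exists j', X'. repeat split; auto. lra. }
  assert (Fsurj : forall t, 0 <= t <= 1 -> exists x, 0 <= x <= 1 /\ F x = t).
  { intros t Ht. pose proof (prep_exists m p t Gp hp_beta Hpr Ht) as HY.
    destruct (series_exists m q _ Gq (jg_valid m p t)) as [X HX].
    exists X. split. apply (series_01 m q _ X Gq (jg_valid m p t) HX).
    apply (Fat _ X t (jg_valid m p t) HX HY). }
  exists F. split; [|split; [|split; [|split]]].
  - intros x d Hx V Hrep.
    assert (Vn : valid_digits m (nega_digit m d)).
    { intros n Hn. unfold nega_digit. destruct (Nat.odd n). apply V; auto. lia. }
    destruct (series_exists m p _ Gp Vn) as [Y HY].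
    rewrite (Fat _ x Y Vn Hrep HY).
    apply is_series_ext with (Qterm p (nega_digit m d)); auto.
    intro k. symmetry. apply Fterm_eq.
  - exact F0.
  - exact F1.
  - intros x y Hx Hxy _. apply Fmono; auto.
  - intros x Hx eps Heps.
    assert (Fb : forall y, 0 <= y <= 1 -> 0 <= F y <= 1) by (intros; apply Fspec; lra).
    assert (Up : exists d2, 0 < d2 /\ forall y, 0 <= y <= 1 -> y < x + d2 -> F y < F x + eps).
    { destruct (Rle_dec (F x + eps / 2) 1) as [h|h].
      - destruct (Fsurj (F x + eps / 2)) as [x2 [Hx2 E2]]. pose proof (Fb x Hx). lra.
        assert (x < x2).
        { destruct (Rlt_dec x x2) as [l|l]; auto. exfalso.
          pose proof (Fmono x2 x ltac:(lra) ltac:(lra)). lra. }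
        exists (x2 - x). split. lra. intros y Hy Hyx.
        pose proof (Fmono y x2 ltac:(lra) ltac:(lra)). lra.
      - exists 1. split. lra. intros y Hy _. pose proof (Fb y Hy). lra. }
    assert (Lo : exists d1, 0 < d1 /\ forall y, 0 <= y <= 1 -> x - d1 < y -> F x - eps < F y).
    { destruct (Rle_dec 0 (F x - eps / 2)) as [h|h].
      - destruct (Fsurj (F x - eps / 2)) as [x1 [Hx1 E1]]. pose proof (Fb x Hx). lra.
        assert (x1 < x).
        { destruct (Rlt_dec x1 x) as [l|l]; auto. exfalso.
          pose proof (Fmono x x1 ltac:(lra) ltac:(lra)). lra. }
        exists (x - x1). split. lra. intros y Hy Hyx.
        pose proof (Fmono x1 y ltac:(lra) ltac:(lra)). lra.
      - exists 1. split. lra. intros y Hy _. pose proof (Fb y Hy). lra. }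
    destruct Up as [d2 [Hd2 U]]. destruct Lo as [d1 [Hd1 L]].
    exists (Rmin d1 d2). split. apply Rmin_pos; auto.
    intros y Hy Hyx. pose proof (Rmin_l d1 d2). pose proof (Rmin_r d1 d2).
    apply Rabs_def2 in Hyx. destruct Hyx as [a b].
    pose proof (U y Hy ltac:(lra)). pose proof (L y Hy ltac:(lra)).
    apply Rabs_def1; lra.
Qed.
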